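(* Let $M$ be a finite abelian group of exponent greater than $2$ and even order, written as $M=C_{2i_1}\times\cdots\times C_{2i_s}\times M_1$ with $M_1$ of odd order, $s\geq1$, $i_j\geq 1$. Then $\mathrm{Aut}(L_M)\cong\mathcal{A}\ltimes_\sigma\mathcal{B}$ and $\mathrm{Half}(L_M)\cong C_2\times(\mathcal{A}\ltimes_\sigma\mathcal{B})$, where $\mathcal{A}\cong S_3\times\mathrm{Aut}(M)$, $\mathcal{B}\cong C_2^{2s}$, and $\sigma:\mathcal{A}\to\mathrm{Aut}(\mathcal{B})$ is the conjugation action $\sigma_\alpha(\beta)=\alpha\beta\alpha^{-1}$ inside $\mathrm{Aut}(L_M)$.
   Context: $C_n$ denotes the cyclic group of order $n$ and $S_3$ the symmetric group on three letters. Let $K=\{1,a,b,c\}$ be the Klein four-group. Set $L_M=K\times M$ with the operation $(A,x)*(B,y)=(AB,xy)$ if $B=1$, and $(A,x)*(B,y)=(AB,x^{-1}y)$ if $B\neq 1$. For $u,v\in M$ with $u^2=v^2=1$, $\alpha_{(u,v)}:K\to M$ is defined by $\alpha_{(u,v)}(1)=1$, $\alpha_{(u,v)}(a)=u$, $\alpha_{(u,v)}(b)=v$, $\alpha_{(u,v)}(c)=uv$. For $f'\in\mathrm{Aut}(K)$, $f''\in\mathrm{Aut}(M)$ define $F^+_{(f',f'',u,v)}(A,x)=(f'(A),f''(x)\alpha_{(u,v)}(A))$. Let $H=\{x\in M:x^2=1\}$, $\mathcal{A}=\{F^+_{(f',f'',1,1)}: f'\in\mathrm{Aut}(K), f''\in\mathrm{Aut}(M)\}$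 and $\mathcal{B}=\{F^+_{(I_K,I_M,x,y)}: x,y\in H\}$, where $I_K,I_M$ are identity maps; both are subgroups of $\mathrm{Aut}(L_M)$. $\mathrm{Half}(L_M)$ is the group of half-automorphisms of $L_M$, i.e. bijections $f$ with $f(XY)\in\{f(X)f(Y),f(Y)f(X)\}$ for all $X,Y$. *)

(* Defs.v *)
From mathcomp Require Import all_boot all_order all_algebra all_fingroup all_solvable.
Set Implicit Arguments. Unset Strict Implicit. Unset Printing Implicit Defensive.
Local Open Scope group_scope.

Definition Klein := ('Z_2 * 'Z_2)%type.
Definition ka : Klein := (1%R, 0%R).
Definition kb : Klein := (0%R, 1%R).
Definition kc : Klein := (1%R, 1%R).

Section LM.
Variable gT : finGroupType.

Definition LT := (Klein * gT)%type.

Definition Lmul (X Y : LT) : LT :=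
  (X.1 * Y.1, if Y.1 == 1 then X.2 * Y.2 else X.2^-1 * Y.2).

Definition alphaK (u v : gT) (A : Klein) : gT :=
  if A == 1 then 1 else if A == ka then u else if A == kb then v else u * v.

Definition Fplus (f1 : {perm Klein}) (f2 : {perm gT}) (u v : gT) (X : LT) : LT :=
  (f1 X.1, f2 X.2 * alphaK u v X.1).

Definition Hinv : {set gT} := [set x : gT | x ^+ 2 == 1].

(* the set A (generated group; it is a subgroup by the paper) *)
Definition Aset : {set {perm LT}} :=
  [set p : {perm LT} | [exists f1 in Aut [set: Klein], exists f2 in Aut [set: gT],
     [forall X, p X == Fplus f1 f2 1 1 X]]].
Definition Bset : {set {perm LT}} :=
  [set p : {perm LT} | [exists x in Hinv, exists y in Hinv,
     [forall X, p X == Fplus 1 1 x y X]]].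

Definition Agrp : {group {perm LT}} := <<Aset>>%G.
Definition Bgrp : {group {perm LT}} := <<Bset>>%G.

Definition AutLset : {set {perm LT}} :=
  [set p : {perm LT} | [forall X, forall Y, p (Lmul X Y) == Lmul (p X) (p Y)]].
Definition HalfLset : {set {perm LT}} :=
  [set p : {perm LT} | [forall X, forall Y,
     (p (Lmul X Y) == Lmul (p X) (p Y)) || (p (Lmul X Y) == Lmul (p Y) (p X))]].

Definition AutL : {group {perm LT}} := <<AutLset>>%G.
Definition HalfL : {group {perm LT}} := <<HalfLset>>%G.

End LM.

(* Main.v *)
Require Import Defs.
From mathcomp Require Import all_boot all_order all_algebra all_fingroup all_solvable.
From mathcomp Require mxabelem.
Local Open Scope group_scope.
Set Implicit Arguments. Unset Strict Implicit. Unset Printing Implicit Defensive.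

Lemma kcases (A : Klein) : [|| A == 1, A == ka, A == kb | A == kc].
Proof. by case: A => [[[|[|?]] ?] [[|[|?]] ?]]. Qed.

Lemma kcasesP (A : Klein) : [\/ A = 1, A = ka, A = kb | A = kc].
Proof. by case/or4P: (kcases A) => /eqP->; [constructor 1|constructor 2|constructor 3|constructor 4]. Qed.

Lemma kmulC (A B : Klein) : A * B = B * A.
Proof. by case: (kcasesP A) => ->; case: (kcasesP B) => ->; apply/eqP. Qed.

Lemma kmulAA (A : Klein) : A * A = 1.
Proof. by case: (kcasesP A) => ->; apply/eqP. Qed.

Lemma kinvE (A : Klein) : A^-1 = A.
Proof. by rewrite -[A^-1]mulg1 -(kmulAA A) mulgA mulVg mul1g. Qed.

Lemma ka1 : (ka == 1) = false. Proof. by []. Qed.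
Lemma kb1 : (kb == 1) = false. Proof. by []. Qed.
Lemma kc1 : (kc == 1) = false. Proof. by []. Qed.
Lemma kakb : ka * kb = kc. Proof. by apply/eqP. Qed.
Lemma kbka : kb * ka = kc. Proof. by apply/eqP. Qed.
Lemma kakc : ka * kc = kb. Proof. by apply/eqP. Qed.
Lemma kcka : kc * ka = kb. Proof. by apply/eqP. Qed.
Lemma kbkc : kb * kc = ka. Proof. by apply/eqP. Qed.
Lemma kckb : kc * kb = ka. Proof. by apply/eqP. Qed.
Lemma kab : (ka == kb) = false. Proof. by []. Qed.
Lemma kac : (ka == kc) = false. Proof. by []. Qed.
Lemma kbc : (kb == kc) = false. Proof. by []. Qed.

Lemma AutTP (T : finGroupType) (f : {perm T}) :
  reflect (forall x y, f (x * y) = f x * f y) (f \in Aut [set: T]).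
Proof.
rewrite inE; apply: (iffP andP) => [[_ /morphicP fM] x y| fM]; first by rewrite fM ?inE.
by split; [apply/subsetP=> x; rewrite inE | apply/morphicP=> x y _ _; apply: fM].
Qed.

Lemma hom1 (T : finGroupType) (f : T -> T) : (forall x y, f (x * y) = f x * f y) -> f 1 = 1.
Proof. by move=> fM; apply: (mulgI (f 1)); rewrite -fM !mulg1. Qed.

Lemma homV (T : finGroupType) (f : T -> T) : (forall x y, f (x * y) = f x * f y) ->
  forall x, f x^-1 = (f x)^-1.
Proof. by move=> fM x; apply: (mulgI (f x)); rewrite -fM !mulgV (hom1 fM). Qed.

Lemma permAut1 (T : finGroupType) (f : {perm T}) : f \in Aut [set: T] -> forall x, (f x == 1) = (x == 1).
Proof.
move=> /AutTP fM x; have f1 := hom1 fM.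
by rewrite -{1}f1 (inj_eq perm_inj).
Qed.

Section Basic.
Variable gT : finGroupType.
Hypothesis cM : forall x y : gT, x * y = y * x.
Local Notation L := (LT gT).
Implicit Types (X Y : L) (x y u v : gT) (A B : Klein).

Lemma mulgCA x y u : x * (y * u) = y * (x * u).
Proof. by rewrite !mulgA [x * y]cM. Qed.
Lemma mulgAC x y u : x * y * u = x * u * y.
Proof. by rewrite -!mulgA [y * u]cM. Qed.
Lemma mulgACA x y u v : x * y * (u * v) = x * u * (y * v).
Proof. by rewrite -!mulgA (mulgCA y). Qed.
Lemma invMgC x y : (x * y)^-1 = x^-1 * y^-1.
Proof. by rewrite invMg cM. Qed.

Lemma alphaK1 u v : alphaK u v 1 = 1. Proof. by []. Qed.
Lemma alphaKa u v : alphaK u v ka = u. Proof. by []. Qed.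
Lemma alphaKb u v : alphaK u v kb = v. Proof. by []. Qed.
Lemma alphaKc u v : alphaK u v kc = u * v. Proof. by []. Qed.

Lemma Hinv_inv u : u \in Hinv gT -> u^-1 = u.
Proof. by rewrite inE expgS expg1 -eq_invg_mul => /eqP. Qed.

Lemma alphaK_inv u v A : u \in Hinv gT -> v \in Hinv gT -> (alphaK u v A)^-1 = alphaK u v A.
Proof.
move=> Hu Hv; case: (kcasesP A) => ->; rewrite ?alphaK1 ?alphaKa ?alphaKb ?alphaKc ?invg1 //.
  exact: Hinv_inv.
  exact: Hinv_inv.
by rewrite invMg (Hinv_inv Hu) (Hinv_inv Hv) cM.
Qed.

Lemma alphaKM u v A B : u \in Hinv gT -> v \in Hinv gT ->
  alphaK u v (A * B) = alphaK u v A * alphaK u v B.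
Proof.
move=> Hu Hv; have uu : u * u = 1 by rewrite -{1}(Hinv_inv Hu) mulVg.
have vv : v * v = 1 by rewrite -{1}(Hinv_inv Hv) mulVg.
case: (kcasesP A) => ->; case: (kcasesP B) => ->;
 rewrite ?mul1g ?mulg1 ?kmulAA ?kakb ?kbka ?kakc ?kcka ?kbkc ?kckb
   ?alphaK1 ?alphaKa ?alphaKb ?alphaKc ?mul1g ?mulg1 //.
- by rewrite mulgA uu mul1g.
- by rewrite [u * v]cM mulgA vv mul1g.
- by rewrite [u * v]cM -mulgA uu mulg1.
- by rewrite -mulgA vv mulg1.
- by rewrite mulgA [u * v]cM -(mulgA v) uu mulg1 vv.
Qed.

Lemma Fplus_inj (f1 : {perm Klein}) (f2 : {perm gT}) u v : injective (Fplus f1 f2 u v).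
Proof.
case=> A x [B y] [/perm_inj eAB]; rewrite -eAB => /mulIg /perm_inj ->.
by rewrite eAB.
Qed.

Definition Fperm f1 f2 u v : {perm L} := perm (@Fplus_inj f1 f2 u v).

Lemma FpermE f1 f2 u v X : Fperm f1 f2 u v X = Fplus f1 f2 u v X.
Proof. by rewrite permE. Qed.

Lemma Fplus_hom (f1 : {perm Klein}) (f2 : {perm gT}) u v :
  f1 \in Aut [set: Klein] -> f2 \in Aut [set: gT] -> u \in Hinv gT -> v \in Hinv gT ->
  forall X Y, Fplus f1 f2 u v (Lmul X Y) = Lmul (Fplus f1 f2 u v X) (Fplus f1 f2 u v Y).
Proof.
move=> Af1 Af2 Hu Hv [A x] [B y]; have /AutTP f1M := Af1; have /AutTP f2M := Af2.
rewrite /Fplus /Lmul /= f1M permAut1 //; congr (_, _).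
rewrite alphaKM //; case: (B == 1) => /=.
  by rewrite f2M mulgACA.
rewrite f2M invMg alphaK_inv // (homV f2M).
by rewrite mulgACA (cM (alphaK u v A)).
Qed.

Definition psi (X : L) : L := (X.1, if X.1 == 1 then X.2 else X.2^-1).

Lemma psiK X : psi (psi X) = X.
Proof. by case: X => A x; rewrite /psi /=; case: (A == 1); rewrite /= ?invgK. Qed.

Lemma psi_inj : injective psi. Proof. exact: can_inj psiK. Qed.
Definition psiperm : {perm L} := perm psi_inj.
Lemma psipermE X : psiperm X = psi X. Proof. by rewrite permE. Qed.

Lemma psi_half X Y : psi (Lmul X Y) = Lmul (psi X) (psi Y) \/ psi (Lmul X Y) = Lmul (psi Y) (psi X).
Proof.
case: X Y => A x [B y]; rewrite /psi /Lmul /=.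
case: (boolP (A == 1)) => [/eqP ->|nA]; case: (boolP (B == 1)) => [/eqP ->|nB];
  rewrite ?mul1g ?mulg1 ?eqxx ?(negbTE nA) ?(negbTE nB).
- by left.
- by right; rewrite invMg invgK.
- by right; rewrite invMg.
case: (boolP (A * B == 1)) => [/eqP eAB|nAB].
  have eAB' : A = B by rewrite -[A]mulg1 -(kmulAA B) mulgA eAB mul1g.
  by right; rewrite -eAB' kmulAA invgK cM.
by left; rewrite invgK invMgC invgK.
Qed.

End Basic.

Unset Implicit Arguments.

Section Char.
Variable gT : finGroupType.
Hypothesis cM : forall x y : gT, x * y = y * x.
Variable z : gT.
Hypothesis hz : z * z != 1.
Local Notation L := (LT gT).
Implicit Types (X Y : L) (x y u v : gT) (A B : Klein).
Variable p : {perm L}.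
Hypothesis hp : forall X Y, p (Lmul X Y) = Lmul (p X) (p Y) \/ p (Lmul X Y) = Lmul (p Y) (p X).

Lemma Lmul11 : Lmul ((1,1) : L) (1,1) = (1,1).
Proof. by rewrite /Lmul /= ?eqxx !mulg1. Qed.

Lemma Lidem X : Lmul X X = X -> X = (1,1).
Proof.
case: X => A x; rewrite /Lmul /= kmulAA => [[eA]]; rewrite -eA eqxx => exx.
have e2 : x * x = x * 1 by rewrite exx mulg1.
by rewrite (mulgI _ _ _ e2).
Qed.

Lemma p11 : p (1,1) = (1,1).
Proof. by apply: Lidem; have := hp (1,1) (1,1); rewrite Lmul11; case. Qed.

Lemma sq_p X : p (Lmul X X) = Lmul (p X) (p X).
Proof. by case: (hp X X). Qed.

Lemma pN_sq y : y * y != 1 -> (p (1,y)).1 = 1.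
Proof.
move=> hy; apply/eqP; apply/negPn/negP => hne.
have : Lmul (p (1,y)) (p (1,y)) = (1,1).
  by case: (p (1,y)) hne => B t /= hB; rewrite /Lmul /= (negbTE hB) kmulAA mulVg.
rewrite -sq_p -p11 => /perm_inj; rewrite /Lmul /= ?eqxx mulg1 => [[]] /eqP.
by rewrite (negbTE hy).
Qed.

Lemma pN y : (p (1,y)).1 = 1.
Proof.
have [hy|hy] := boolP (y * y != 1); first exact: pN_sq.
move/negPn/eqP: hy => yy.
have e : ((1, y) : L) = Lmul (1,z) (1, z^-1 * y) by rewrite /Lmul /= ?eqxx mulg1 mulKVg.
have h1 : (z^-1 * y) * (z^-1 * y) != 1.
  rewrite mulgA -(mulgA z^-1) (cM y) mulgA -mulgA yy mulg1 -invMg.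
  by rewrite eq_invg1.
by rewrite e; case: (hp (1,z) (1, z^-1 * y)) => ->; rewrite /Lmul /= !pN_sq // mulg1.
Qed.

Definition g y := (p (1,y)).2.

Lemma p1E y : p (1,y) = (1, g y).
Proof. by have := pN y; rewrite /g; case: (p (1,y)) => a b /= ->. Qed.

Lemma gM x y : g (x * y) = g x * g y.
Proof.
have e : ((1, x * y) : L) = Lmul (1,x) (1,y) by rewrite /Lmul /= ?eqxx mulg1.
rewrite {1}/g e; case: (hp (1,x) (1,y)) => ->; rewrite !p1E /Lmul /= ?eqxx //; by rewrite cM.
Qed.

Lemma g_inj : injective g.
Proof. by move=> x y e; have := p1E x; rewrite e -p1E => /perm_inj [->]. Qed.

Definition gperm : {perm gT} := perm g_inj.
Lemma gpermE y : gperm y = g y. Proof. by rewrite permE. Qed.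
Lemma gAut : gperm \in Aut [set: gT].
Proof. by apply/AutTP => x y; rewrite !gpermE gM. Qed.
Lemma g1 : g 1 = 1. Proof. exact: (@hom1 gT g gM). Qed.
Lemma gV y : g y^-1 = (g y)^-1. Proof. exact: (@homV gT g gM y). Qed.
Lemma g_surj w : g (gperm^-1 w) = w.
Proof. by rewrite -gpermE permKV. Qed.

Definition f A := (p (A,1)).1.
Definition w A := (p (A,1)).2.
Lemma pA1E A : p (A,1) = (f A, w A). Proof. by rewrite /f /w; case: (p (A,1)). Qed.

Lemma pfst A x : (p (A,x)).1 = f A.
Proof.
have e : ((A, x) : L) = Lmul (A,1) (1,x) by rewrite /Lmul /= ?eqxx mulg1 mul1g.
by rewrite e; case: (hp (A,1) (1,x)) => ->; rewrite p1E pA1E /Lmul /= ?mulg1 ?mul1g.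
Qed.

Lemma fM A B : f (A * B) = f A * f B.
Proof.
have e : ((A * B, 1) : L) = Lmul (A,1) (B,1) by rewrite /Lmul /=; case: ifP; rewrite ?invg1 mulg1.
by rewrite {1}/f e; case: (hp (A,1) (B,1)) => ->; rewrite !pA1E /Lmul //= kmulC.
Qed.

Lemma f1 : f 1 = 1. Proof. exact: hom1 fM. Qed.

Lemma f_eq1 A : (f A == 1) = (A == 1).
Proof.
apply/eqP/eqP => [fA|->]; last exact: f1.
have : p (1, gperm^-1 (w A)) = p (A,1) by rewrite p1E g_surj pA1E fA.
by move/perm_inj => [].
Qed.

Lemma f_inj : injective f.
Proof.
move=> A B e; have : f (A * B) == 1 by rewrite fM e -fM kmulAA f1.
rewrite f_eq1 => /eqP eAB.
by rewrite -[A]mulg1 -(kmulAA B) mulgA eAB mul1g.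
Qed.

Definition fperm : {perm Klein} := perm f_inj.
Lemma fpermE A : fperm A = f A. Proof. by rewrite permE. Qed.
Lemma fAut : fperm \in Aut [set: Klein].
Proof. by apply/AutTP => A B; rewrite !fpermE fM. Qed.

Lemma pE A x : p (A,x) = (f A, (p (A,x)).2).
Proof. by rewrite -(pfst A x); case: (p (A,x)). Qed.

Lemma split A x : A != 1 -> (p (A,x)).2 = w A * g x \/ (p (A,x)).2 = w A * (g x)^-1.
Proof.
move=> nA; have e : ((A, x) : L) = Lmul (A,1) (1,x) by rewrite /Lmul /= ?eqxx mulg1 mul1g.
rewrite e; case: (hp (A,1) (1,x)) => ->; rewrite pA1E p1E /Lmul /= ?eqxx; first by left.
by rewrite f_eq1 (negbTE nA); right; rewrite cM.
Qed.

Lemma mulright A x y : A != 1 ->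
  (p (A, x * y)).2 = (p (A,x)).2 * g y \/ (p (A, x * y)).2 = (g y)^-1 * (p (A,x)).2.
Proof.
move=> nA; have e : ((A, x * y) : L) = Lmul (A,x) (1,y) by rewrite /Lmul /= ?eqxx mulg1.
rewrite e; case: (hp (A,x) (1,y)) => ->; rewrite (pE A x) p1E /Lmul /= ?eqxx; first by left.
by rewrite f_eq1 (negbTE nA); right.
Qed.

Definition Z := g z.
Lemma hZ : Z * Z != 1.
Proof. by rewrite /Z -gM -g1 (inj_eq g_inj). Qed.
Lemma hZV : Z^-1 != Z.
Proof.
apply: contra hZ => /eqP e; by rewrite -{1}e mulVg.
Qed.

Let mulgCA := mulgCA cM.
Let mulgAC := mulgAC cM.
Let mulgACA := mulgACA cM.
Let invMgC := invMgC cM.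

Lemma sign_disj A : A != 1 ->
  (forall x, (p (A,x)).2 = w A * g x) \/ (forall x, (p (A,x)).2 = w A * (g x)^-1).
Proof.
move=> nA; case: (split A z nA) => hzA; [left|right] => y;
  have ey : y = z * (z^-1 * y) by rewrite mulKVg.
- case: (mulright A z (z^-1 * y) nA); rewrite -ey hzA gM gV.
    by move=> ->; rewrite -mulgA mulKVg.
  move=> h; case: (split A y nA) => // h2; exfalso; move: hZ; rewrite /Z.
  move: h; rewrite h2 invMgC invgK.
  rewrite mulgACA [g z * w A]cM -mulgA => /mulgI.
  by rewrite mulgCA -{1}[(g y)^-1]mulg1 => /mulgI <-; rewrite eqxx.
- case: (mulright A z (z^-1 * y) nA); rewrite -ey hzA gM gV; last first.
    by move=> ->; rewrite invMg invgK mulgACA mulgV mulg1 cM.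
  move=> h; case: (split A y nA) => // h2; exfalso; move: hZ; rewrite /Z.
  move: h; rewrite h2 -!mulgA => /mulgI.
  rewrite mulgA -{1}[g y]mul1g => /mulIg e.
  by rewrite -[g z * g z]invgK invMg -e invg1 eqxx.
Qed.

Definition gs (b : bool) (t : gT) := if b then t else t^-1.
Definition sg A := ((p (A,z)).2 == w A * Z).

Lemma signE A x : A != 1 -> (p (A,x)).2 = w A * gs (sg A) (g x).
Proof.
move=> nA; rewrite /sg; case: (sign_disj A nA) => h; rewrite !h /gs.
  by rewrite /Z eqxx.
by rewrite (inj_eq (mulgI _)) (negbTE hZV).
Qed.

Lemma gs1 b : gs b 1 = 1. Proof. by case: b; rewrite /gs ?invg1. Qed.
Lemma gsV b t : gs b t^-1 = (gs b t)^-1. Proof. by case: b. Qed.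
Lemma gsN b t : gs (~~ b) t = (gs b t)^-1. Proof. by case: b; rewrite /gs ?invgK. Qed.
Lemma gsZV b : (gs b (g z))^-1 != gs b (g z).
Proof.
by case: b; rewrite /gs ?invgK; [exact: hZV | rewrite eq_sym; exact: hZV].
Qed.
Lemma gsZ2 b : gs b (g z) * gs b (g z) != 1.
Proof.
case: b; rewrite /gs; first exact: hZ.
by rewrite -invMg eq_invg1; exact: hZ.
Qed.

Lemma neq_AB A B : A != B -> A * B != 1.
Proof.
apply: contra => /eqP e; apply/eqP.
by rewrite -[A]mulg1 -(kmulAA B) mulgA e mul1g.
Qed.

Lemma cross A B x y : A != 1 -> B != 1 -> A != B ->
  (p (A * B, x^-1 * y)).2 = ((p (A,x)).2)^-1 * (p (B,y)).2 \/
  (p (A * B, x^-1 * y)).2 = ((p (B,y)).2)^-1 * (p (A,x)).2.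
Proof.
move=> nA nB nAB.
have e : ((A * B, x^-1 * y) : L) = Lmul (A,x) (B,y) by rewrite /Lmul /= (negbTE nB).
rewrite e; case: (hp (A,x) (B,y)) => ->; rewrite (pE A x) (pE B y) /Lmul /=.
  by rewrite f_eq1 (negbTE nB); left.
by rewrite f_eq1 (negbTE nA); right.
Qed.

Lemma E1 A B : A != 1 -> B != 1 -> A != B -> sg (A * B) = sg A ->
  w (A * B) = (w A)^-1 * w B.
Proof.
move=> nA nB nAB eC; have nC := neq_AB A B nAB.
have h11 := cross A B 1 1 nA nB nAB.
rewrite invg1 mulg1 !signE // g1 !gs1 !mulg1 in h11.
case: h11 => // h11.
have hz1 := cross A B z 1 nA nB nAB.
rewrite mulg1 !signE // g1 gV gs1 mulg1 gsV eC in hz1.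
case: hz1 => hz1.
  move: hz1; rewrite invMg cM -mulgA => /mulgI.
  done.
exfalso; move: hz1; rewrite h11 -mulgA => /mulgI /mulgI /eqP; apply/negP.
exact: gsZV.
Qed.

Lemma Mixed A B : A != 1 -> B != 1 -> A != B -> sg (A * B) = sg A -> sg B != sg A -> False.
Proof.
move=> nA nB nAB eC nBA; have nC := neq_AB A B nAB.
have eB : sg B = ~~ sg A by move: nBA; case: (sg A); case: (sg B).
have wC := E1 A B nA nB nAB eC.
set U := gs (sg A) (g z).
have h1z := cross A B 1 z nA nB nAB.
rewrite invg1 mul1g !signE // g1 gs1 mulg1 eC eB gsN -/U in h1z.
have wC' : w (A * B) = (w B)^-1 * w A.
  case: h1z => h1z.
    exfalso; move: h1z; rewrite wC -mulgA => /mulgI /mulgI /eqP; apply/negP.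
    by rewrite eq_sym; exact: gsZV.
  move: h1z; rewrite invMg invgK cM -mulgA => /mulgI.
  done.
have hzz := cross A B z z nA nB nAB.
rewrite mulVg !signE // g1 gs1 mulg1 eB gsN -/U in hzz.
case: hzz => hzz.
  move: hzz; rewrite invMgC mulgACA wC.
  rewrite -{1}[(w A)^-1 * w B]mulg1 => /mulgI /eqP; rewrite eq_sym -invMg eq_invg1.
  by apply/negP; exact: gsZ2.
move: hzz; rewrite invMgC invgK mulgACA wC'.
rewrite -{1}[(w B)^-1 * w A]mulg1 => /mulgI /eqP; rewrite eq_sym.
by apply/negP; exact: gsZ2.
Qed.

Lemma sg_eq : sg ka = sg kb /\ sg kb = sg kc.
Proof.
have nka : ka != 1 by []. have nkb : kb != 1 by []. have nkc : kc != 1 by [].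
have eab : sg ka = sg kb.
  case: (boolP (sg ka == sg kb)) => [/eqP//|nab]; exfalso.
  have [eca|nca] := boolP (sg kc == sg ka).
    apply: (Mixed ka kb nka nkb (isT : ka != kb)); first by rewrite kakb (eqP eca).
    by rewrite eq_sym.
  apply: (Mixed kb ka nkb nka (isT : kb != ka)); last by [].
  by rewrite kbka; move: nab nca; case: (sg ka); case: (sg kb); case: (sg kc).
split=> //; case: (boolP (sg kb == sg kc)) => [/eqP//|nbc]; exfalso.
apply: (Mixed ka kc nka nkc (isT : ka != kc)); first by rewrite kakc.
by rewrite eab eq_sym.
Qed.

Lemma w_prop : w ka * w ka = 1 /\ w kb * w kb = 1 /\ w kc = w ka * w kb.
Proof.
have nka : ka != 1 by []. have nkb : kb != 1 by []. have nkc : kc != 1 by [].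
have [eab ebc] := sg_eq.
have h1 := E1 ka kb nka nkb isT; rewrite kakb in h1; have {}h1 := h1 (esym (etrans eab ebc)).
have h3 := E1 ka kc nka nkc isT; rewrite kakc in h3; have {}h3 := h3 (esym eab).
have h4 := E1 kc ka nkc nka isT; rewrite kcka in h4; have {}h4 := h4 ebc.
have aa : w ka * w ka = 1.
  move: h3; rewrite h1 mulgA -{1}[w kb]mul1g => /mulIg e.
  by rewrite -[_ * _]invgK invMg -e invg1.
have bb : w kb * w kb = 1.
  move: h4; rewrite h1 invMg invgK -mulgA aa mulg1.
  by move=> e; rewrite {1}e mulVg.
have ia : (w ka)^-1 = w ka by apply: (mulgI (w ka)); rewrite mulgV aa.
by rewrite h1 ia.
Qed.

Definition uu := w ka.
Definition vv := w kb.

Lemma uuH : uu \in Hinv gT. Proof. by rewrite inE expgS expg1 /uu (proj1 w_prop). Qed.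
Lemma vvH : vv \in Hinv gT. Proof. by rewrite inE expgS expg1 /vv (proj1 (proj2 w_prop)). Qed.

Lemma w_alpha A : A != 1 -> w A = alphaK uu vv A.
Proof.
case: (kcasesP A) => -> // _; rewrite ?alphaKa ?alphaKb ?alphaKc //.
exact: (proj2 (proj2 w_prop)).
Qed.

Lemma char_half X :
  p X = Fplus fperm gperm uu vv (if ~~ sg ka then psi X else X).
Proof.
case: X => A x; case: (boolP (A == 1)) => [/eqP ->|nA].
  by rewrite p1E; case: (~~ sg ka); rewrite /psi /Fplus /= fpermE f1 gpermE mulg1.
have [eab ebc] := sg_eq.
have sA : sg A = sg ka by case: (kcasesP A) nA => -> // _; rewrite ?eab ?ebc.
rewrite pE signE // sA (w_alpha A nA).
case: (sg ka); rewrite /psi /Fplus /= ?(negbTE nA) fpermE gpermE /gs //=.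
  by rewrite cM.
by rewrite gV cM.
Qed.

Lemma aut_sg : (forall X Y, p (Lmul X Y) = Lmul (p X) (p Y)) -> sg ka.
Proof.
move=> hom; rewrite /sg.
have e : ((ka, z) : L) = Lmul (ka,1) (1,z) by rewrite /Lmul /= ?eqxx ?mulg1 ?mul1g.
by rewrite e hom pA1E p1E /Lmul /= ?eqxx /Z.
Qed.

End Char.

Section Groups.
Variable gT : finGroupType.
Hypothesis cM : forall x y : gT, x * y = y * x.
Variable z : gT.
Hypothesis hz : z * z != 1.
Local Notation L := (LT gT).
Implicit Types (X Y : L) (x y u v : gT) (A B : Klein) (p q : {perm L}).

Lemma autP p : reflect (forall X Y, p (Lmul X Y) = Lmul (p X) (p Y)) (p \in AutLset gT).
Proof.
rewrite inE; apply: (iffP forallP) => [h X Y | h X].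
  exact/eqP/(forallP (h X) Y).
by apply/forallP => Y; apply/eqP.
Qed.

Lemma halfP p : reflect (forall X Y, p (Lmul X Y) = Lmul (p X) (p Y) \/ p (Lmul X Y) = Lmul (p Y) (p X))
  (p \in HalfLset gT).
Proof.
rewrite inE; apply: (iffP forallP) => [h X Y | h X].
  by case/orP: (forallP (h X) Y) => /eqP; [left|right].
by apply/forallP => Y; case: (h X Y) => ->; rewrite eqxx ?orbT.
Qed.

Lemma aut_half p : p \in AutLset gT -> p \in HalfLset gT.
Proof. by move/autP=> h; apply/halfP => X Y; left. Qed.

Lemma AutL_gs : group_set (AutLset gT).
Proof.
apply/group_setP; split; first by apply/autP => X Y; rewrite !perm1.
by move=> p q /autP hp /autP hq; apply/autP => X Y; rewrite !permM hp hq.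
Qed.

Lemma HalfL_gs : group_set (HalfLset gT).
Proof.
apply/group_setP; split; first by apply/halfP => X Y; left; rewrite !perm1.
move=> p q /halfP hp /halfP hq; apply/halfP => X Y; rewrite !permM.
case: (hp X Y) => ->; [case: (hq (p X) (p Y)) | case: (hq (p Y) (p X))] => ->; by [left|right].
Qed.

Lemma AutLE : AutL gT = AutLset gT :> {set _}.
Proof. exact: gen_set_id AutL_gs. Qed.
Lemma HalfLE : HalfL gT = HalfLset gT :> {set _}.
Proof. exact: gen_set_id HalfL_gs. Qed.

Lemma HinvE u : (u \in Hinv gT) = (u * u == 1).
Proof. by rewrite inE expgS expg1. Qed.

Lemma Fperm_aut f1 f2 u v : f1 \in Aut [set: Klein] -> f2 \in Aut [set: gT] ->
  u \in Hinv gT -> v \in Hinv gT -> Fperm f1 f2 u v \in AutLset gT.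
Proof.
move=> Af1 Af2 Hu Hv; apply/autP => X Y; rewrite !FpermE.
exact: (Fplus_hom cM Af1 Af2 Hu Hv).
Qed.

Lemma aut_char p : p \in AutLset gT -> exists f1 f2 u v,
  [/\ f1 \in Aut [set: Klein], f2 \in Aut [set: gT], u \in Hinv gT, v \in Hinv gT
    & p = Fperm f1 f2 u v].
Proof.
move=> /[dup] /autP hom /aut_half /halfP hp.
exists (fperm gT cM z hz p hp), (gperm gT cM z hz p hp), (uu gT p), (vv gT p); split.
- exact: fAut gT cM z hz p hp.
- exact: gAut gT cM z hz p hp.
- exact: uuH gT cM z hz p hp.
- exact: vvH gT cM z hz p hp.
apply/permP => X; rewrite FpermE (char_half gT cM z hz p hp X) (aut_sg gT cM z hz p hp hom) /=.
by [].
Qed.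

Lemma half_char p : p \in HalfLset gT -> exists e f1 f2 u v,
  [/\ f1 \in Aut [set: Klein], f2 \in Aut [set: gT], u \in Hinv gT, v \in Hinv gT
    & p = (if e then psiperm gT else 1) * Fperm f1 f2 u v].
Proof.
move=> /halfP hp.
exists (~~ sg gT z p ka), (fperm gT cM z hz p hp), (gperm gT cM z hz p hp), (uu gT p), (vv gT p); split.
- exact: fAut gT cM z hz p hp.
- exact: gAut gT cM z hz p hp.
- exact: uuH gT cM z hz p hp.
- exact: vvH gT cM z hz p hp.
apply/permP => X; rewrite permM FpermE (char_half gT cM z hz p hp X).
by case: (~~ _); rewrite ?psipermE ?perm1.
Qed.

Lemma AsetP p : reflect (exists f1 f2, [/\ f1 \in Aut [set: Klein], f2 \in Aut [set: gT]
  & p = Fperm f1 f2 1 1]) (p \in Aset gT).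
Proof.
rewrite inE; apply: (iffP idP).
  case/existsP => f1 /andP [Af1 /existsP [f2 /andP [Af2 /forallP h]]].
  exists f1, f2; split => //; apply/permP => X; rewrite FpermE; exact/eqP/h.
case=> f1 [f2 [Af1 Af2 ->]]; apply/existsP; exists f1; rewrite Af1 /=.
by apply/existsP; exists f2; rewrite Af2 /=; apply/forallP => X; rewrite FpermE.
Qed.

Lemma BsetP p : reflect (exists u v, [/\ u \in Hinv gT, v \in Hinv gT
  & p = Fperm 1 1 u v]) (p \in Bset gT).
Proof.
rewrite inE; apply: (iffP idP).
  case/existsP => u /andP [Hu /existsP [v /andP [Hv /forallP h]]].
  exists u, v; split => //; apply/permP => X; rewrite FpermE; exact/eqP/h.
case=> u [v [Hu Hv ->]]; apply/existsP; exists u; rewrite Hu /=.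
by apply/existsP; exists v; rewrite Hv /=; apply/forallP => X; rewrite FpermE.
Qed.

Lemma alphaK11 A : alphaK 1 1 A = (1 : gT).
Proof. by case: (kcasesP A) => ->; rewrite ?alphaK1 ?alphaKa ?alphaKb ?alphaKc ?mulg1. Qed.

Lemma alphaK_mul u v u' v' A : alphaK u v A * alphaK u' v' A = alphaK (u * u') (v * v') A.
Proof.
case: (kcasesP A) => ->; rewrite ?alphaK1 ?alphaKa ?alphaKb ?alphaKc ?mulg1 //.
exact: mulgACA cM _ _ _ _.
Qed.

Lemma Fperm1 : Fperm 1 1 1 1 = 1 :> {perm L}.
Proof. by apply/permP => -[A x]; rewrite FpermE perm1 /Fplus /= alphaK11 !perm1 mulg1. Qed.

Lemma FpermMA f1 f2 g1 g2 :
  Fperm f1 f2 1 1 * Fperm g1 g2 1 1 = Fperm (f1 * g1) (f2 * g2) 1 1 :> {perm L}.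
Proof.
by apply/permP => -[A x]; rewrite permM !FpermE /Fplus /= !alphaK11 !mulg1 !permM.
Qed.

Lemma FpermMB u v u' v' :
  Fperm 1 1 u v * Fperm 1 1 u' v' = Fperm 1 1 (u * u') (v * v') :> {perm L}.
Proof.
by apply/permP => -[A x]; rewrite permM !FpermE /Fplus /= !perm1 -mulgA alphaK_mul.
Qed.

Lemma HinvM u v : u \in Hinv gT -> v \in Hinv gT -> u * v \in Hinv gT.
Proof.
rewrite !HinvE => /eqP uu /eqP vv.
by rewrite (mulgACA cM) uu vv mulg1.
Qed.

Lemma Aset_gs : group_set (Aset gT).
Proof.
apply/group_setP; split.
  by apply/AsetP; exists 1, 1; rewrite !group1 Fperm1.
move=> p q /AsetP [f1 [f2 [Af1 Af2 ->]]] /AsetP [g1 [g2 [Ag1 Ag2 ->]]].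
by apply/AsetP; exists (f1 * g1), (f2 * g2); rewrite !groupM // FpermMA.
Qed.

Lemma Bset_gs : group_set (Bset gT).
Proof.
apply/group_setP; split.
  by apply/BsetP; exists 1, 1; rewrite HinvE mulg1 eqxx Fperm1.
move=> p q /BsetP [u [v [Hu Hv ->]]] /BsetP [u' [v' [Hu' Hv' ->]]].
by apply/BsetP; exists (u * u'), (v * v'); rewrite !HinvM // FpermMB.
Qed.

Lemma AgrpE : Agrp gT = Aset gT :> {set _}.
Proof. exact: gen_set_id Aset_gs. Qed.
Lemma BgrpE : Bgrp gT = Bset gT :> {set _}.
Proof. exact: gen_set_id Bset_gs. Qed.

Lemma Aut_Hinv (h : {perm gT}) u : h \in Aut [set: gT] -> u \in Hinv gT -> h u \in Hinv gT.
Proof.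
move=> /AutTP hM; rewrite !HinvE => /eqP uu.
by rewrite -hM uu (hom1 hM).
Qed.

Lemma Fperm_decomp f1 f2 u v : f2 \in Aut [set: gT] ->
  Fperm f1 f2 u v = Fperm 1 1 (f2^-1 u) (f2^-1 v) * Fperm f1 f2 1 1.
Proof.
move=> Af2; have /AutTP f2M := Af2.
apply/permP => -[A x]; rewrite permM !FpermE /Fplus /= !perm1 alphaK11 mulg1 f2M.
congr (_, _ * _); case: (kcasesP A) => ->; rewrite ?alphaK1 ?alphaKa ?alphaKb ?alphaKc.
- by rewrite (hom1 f2M).
- by rewrite permKV.
- by rewrite permKV.
by rewrite f2M !permKV.
Qed.

Lemma AutL_BA : AutL gT :=: Bgrp gT * Agrp gT.
Proof.
apply/eqP; rewrite eqEsubset; apply/andP; split.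
  apply/subsetP => p; rewrite AutLE => /aut_char [f1 [f2 [u [v [Af1 Af2 Hu Hv ->]]]]].
  rewrite Fperm_decomp // BgrpE AgrpE; apply: mem_mulg.
    by apply/BsetP; exists (f2^-1 u), (f2^-1 v); rewrite !Aut_Hinv // groupV.
  by apply/AsetP; exists f1, f2.
apply: mul_subG; apply/subsetP => p; rewrite ?BgrpE ?AgrpE AutLE.
  by case/BsetP => u [v [Hu Hv ->]]; apply: Fperm_aut => //; apply: group1.
by case/AsetP => f1 [f2 [Af1 Af2 ->]]; apply: Fperm_aut => //; rewrite HinvE mulg1.
Qed.

Lemma TI_BA : Bgrp gT :&: Agrp gT = 1.
Proof.
apply/trivgP; apply/subsetP => p; rewrite inE BgrpE AgrpE.
case/andP => /BsetP [u [v [Hu Hv ->]]] /AsetP [f1 [f2 [Af1 Af2 e]]].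
have /AutTP f2M := Af2.
have ea : u = 1.
  have := congr1 (fun q : {perm L} => (q (ka, 1)).2) e.
  by rewrite /= !FpermE /Fplus /= perm1 mul1g alphaKa alphaK11 mulg1 (hom1 f2M).
have eb : v = 1.
  have := congr1 (fun q : {perm L} => (q (kb, 1)).2) e.
  by rewrite /= !FpermE /Fplus /= perm1 mul1g alphaKb alphaK11 mulg1 (hom1 f2M).
by rewrite ea eb Fperm1 inE.
Qed.

Lemma normAB : Agrp gT \subset 'N(Bgrp gT).
Proof.
apply/subsetP => a Aa; rewrite inE; apply/subsetP => _ /imsetP [b Bb ->].
have AutLa : a \in AutL gT by rewrite AutL_BA -[a]mul1g mem_mulg.
have AutLb : b \in AutL gT by rewrite AutL_BA -[b]mulg1 mem_mulg.
have := groupJ AutLb AutLa; rewrite AutLE => /aut_char [f1 [f2 [u [v [Af1 Af2 Hu Hv e]]]]].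
move: Aa Bb; rewrite AgrpE BgrpE => /AsetP [fa [ga [Afa Aga ea]]] /BsetP [u' [v' [Hu' Hv' eb]]].
have /AutTP gaM := Aga; have fa1 := permAut1 Afa.
have key : forall A y, exists B0 y0, a^-1 (A, y) = (B0, y0) /\ fa B0 = A /\ ga y0 = y.
  move=> A y; case e0 : (a^-1 (A,y)) => [B0 y0]; exists B0, y0; split => //.
  have := permKV a (A,y); rewrite e0 ea FpermE /Fplus /= alphaK11 mulg1.
  by case.
have conjE : forall X, (b ^ a) X = a (b (a^-1 X)) by move=> X; rewrite conjgE !permM.
have ef2 : f2 = 1.
  apply/permP => y; rewrite perm1.
  have [B0 [y0 [e0 [eB ey]]]] := key 1 y.
  have eB0 : B0 = 1 by apply/eqP; rewrite -fa1 eB.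
  have := conjE (1, y); rewrite e FpermE e0 eb FpermE eB0 /Fplus /= alphaK1 mulg1 !perm1.
  rewrite ea FpermE /Fplus /= alphaK11 !mulg1 ey => -[_ ->].
  done.
have ef1 : f1 = 1.
  apply/permP => A; rewrite perm1.
  have [B0 [y0 [e0 [eB ey]]]] := key A 1.
  have := conjE (A, 1); rewrite e FpermE e0 eb FpermE /Fplus /= !perm1.
  by rewrite ea FpermE /Fplus /= eB => -[->].
by rewrite e ef1 ef2; apply/BsetP; exists u, v.
Qed.

Lemma nBA : {acts Agrp gT, on group Bgrp gT | 'J}.
Proof. by split; [rewrite astabsJ; exact: normAB | exact: subsetT]. Qed.

Lemma iso_AutL : AutL gT \isog [set: sdprod_by (actby_groupAction nBA)].
Proof.
have actf : {in Bgrp gT & Agrp gT, morph_act (actby_groupAction nBA) 'J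
   (idm (Bgrp gT)) (idm (Agrp gT))}.
  by move=> b a Bb Aa /=; rewrite actbyE.
have inj : 'injm (xsdprodm actf).
  by rewrite injm_xsdprodm !injm_idm !morphim_idm // TI_BA eqxx.
rewrite isog_sym; have := sub_isog (A := setT) (subsetT _) inj.
by rewrite im_xsdprodm !morphim_idm // -AutL_BA.
Qed.

Lemma psi_in_half : psiperm gT \in HalfLset gT.
Proof. by apply/halfP => X Y; rewrite !psipermE; exact: psi_half cM X Y. Qed.

Lemma psi2 : psiperm gT ^+ 2 = 1.
Proof. by apply/permP => X; rewrite expgS expg1 permM !psipermE psiK perm1. Qed.

Lemma zV : z^-1 != z.
Proof. by apply: contra hz => /eqP e; rewrite -{1}e mulVg. Qed.

Lemma psi_neq1 : psiperm gT != 1.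
Proof.
apply/eqP => e; have := congr1 (fun q : {perm L} => q (ka, z)) e.
rewrite /= psipermE perm1 /psi /= => -[ez].
by move: zV; rewrite ez eqxx.
Qed.

Lemma psi_notaut : psiperm gT \notin AutLset gT.
Proof.
apply/negP => /autP h; have := h (ka,1) (1,z).
rewrite !psipermE /Lmul /psi /= ?mulg1 ?mul1g invg1 mul1g => -[ez].
by move: zV; rewrite ez eqxx.
Qed.

Lemma order_psi : #[psiperm gT] = 2.
Proof. exact: nt_prime_order (isT : prime 2) psi2 psi_neq1. Qed.

Lemma Fplus_psi f1 f2 u v X : f1 \in Aut [set: Klein] -> f2 \in Aut [set: gT] ->
  u \in Hinv gT -> v \in Hinv gT ->
  Fplus f1 f2 u v (psi X) = psi (Fplus f1 f2 u v X).
Proof.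
move=> Af1 Af2 Hu Hv; have /AutTP f2M := Af2.
case: X => A x; rewrite /psi /Fplus /= (permAut1 Af1).
case: (A == 1) => //=.
by rewrite (homV f2M) (invMgC cM) (alphaK_inv cM).
Qed.

Lemma psi_comm p : p \in AutLset gT -> commute p (psiperm gT).
Proof.
case/aut_char => f1 [f2 [u [v [Af1 Af2 Hu Hv ->]]]].
by apply/permP => X; rewrite !permM !psipermE !FpermE Fplus_psi.
Qed.

Lemma half_dprod : <[psiperm gT]> \x AutL gT = HalfL gT.
Proof.
have ti : <[psiperm gT]> :&: AutL gT = 1.
  apply/trivgP; apply/subsetP => q /setIP [hq1 hq].
  move: hq1; rewrite /= cycle2g ?order_psi // !inE => /orP [//| /eqP eq]; exfalso.
  by move: hq; rewrite eq AutLE (negbTE psi_notaut).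
have ce : AutL gT \subset 'C(<[psiperm gT]>).
  apply/subsetP => p; rewrite AutLE cent_cycle => Ap; apply/cent1P; exact: psi_comm.
rewrite dprodE //.
apply/eqP; rewrite eqEsubset; apply/andP; split.
  apply: mul_subG; first by rewrite cycle_subG HalfLE psi_in_half.
  by apply/subsetP => p; rewrite AutLE HalfLE; exact: aut_half.
apply/subsetP => p; rewrite HalfLE => /half_char [e [f1 [f2 [u [v [Af1 Af2 Hu Hv ->]]]]]].
apply: mem_mulg; first by case: e; [exact: cycle_id | exact: group1].
by rewrite AutLE Fperm_aut.
Qed.

Lemma iso_HalfL : HalfL gT \isog setX [set: 'Z_2] [set: sdprod_by (actby_groupAction nBA)].
Proof.
apply: (isog_dprod half_dprod (setX_dprod [set: 'Z_2]%G [set: sdprod_by (actby_groupAction nBA)]%G)).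
  rewrite isog_cyclic_card ?cycle_cyclic //; apply/andP; split.
    by apply: prime_cyclic; rewrite cardsX cards1 cardsT card_ord.
  by rewrite -orderE order_psi cardsX cards1 cardsT card_ord.
apply: (isog_trans iso_AutL); exact: isog_set1X.
Qed.

End Groups.

Lemma ktriple (P Q R : Klein) : P != 1 -> Q != 1 -> R != 1 -> P != Q -> P != R -> Q != R -> P * Q = R.
Proof.
by case: (kcasesP P) => ->; case: (kcasesP Q) => ->; case: (kcasesP R) => ->; try (by []); move=> *; apply/eqP.
Qed.

Definition kl (i : 'I_3) : Klein := if val i == 0%N then ka else if val i == 1%N then kb else kc.
Definition lk (A : Klein) : 'I_3 :=
  if A == ka then @Ordinal 3 0%N isT else if A == kb then @Ordinal 3 1%N isT else @Ordinal 3 2%N isT.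

Lemma kl_neq1 i : kl i != 1.
Proof. by case: i => [[|[|[|]]] Hi]. Qed.

Lemma klK i : lk (kl i) = i.
Proof. by case: i => [[|[|[|]]] Hi] //; apply: val_inj. Qed.

Lemma lkK A : A != 1 -> kl (lk A) = A.
Proof. by case: (kcasesP A) => ->. Qed.

Lemma kl_inj : injective kl. Proof. exact: can_inj klK. Qed.

Definition k3f (s : {perm 'I_3}) (A : Klein) : Klein := if A == 1 then 1 else kl (s (lk A)).

Lemma k3f_inj s : injective (k3f s).
Proof.
move=> A B; rewrite /k3f.
case: (boolP (A == 1)) => [/eqP ->|nA]; case: (boolP (B == 1)) => [/eqP ->|nB] //.
- by move=> e; move: (kl_neq1 (s (lk B))); rewrite -e eqxx.
- by move=> e; move: (kl_neq1 (s (lk A))); rewrite e eqxx.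
by move/kl_inj/perm_inj => e; rewrite -(lkK A nA) -(lkK B nB) e.
Qed.

Definition k3 (s : {perm 'I_3}) : {perm Klein} := perm (k3f_inj s).

Lemma k3E s A : k3 s A = k3f s A. Proof. by rewrite permE. Qed.

Lemma k3_1 s : k3 s 1 = 1. Proof. by rewrite k3E /k3f eqxx. Qed.
Lemma k3_neq1 s A : (k3 s A == 1) = (A == 1).
Proof.
have [->|nA] := eqVneq A 1; rewrite k3E /k3f; first by rewrite !eqxx.
by rewrite (negbTE nA) (negbTE (kl_neq1 _)).
Qed.

Lemma neq_AB' (A B : Klein) : A != B -> A * B != 1.
Proof.
apply: contra => /eqP e; apply/eqP.
by rewrite -[A]mulg1 -(kmulAA B) mulgA e mul1g.
Qed.

Lemma k3_hom s A B : k3 s (A * B) = k3 s A * k3 s B.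
Proof.
case: (boolP (A == 1)) => [/eqP ->|nA]; first by rewrite k3_1 !mul1g.
case: (boolP (B == 1)) => [/eqP ->|nB]; first by rewrite k3_1 !mulg1.
case: (boolP (A == B)) => [/eqP ->|nAB]; first by rewrite !kmulAA k3_1.
have nC := neq_AB' A B nAB.
have nAC : A != A * B.
  by apply: contra nB => /eqP e; rewrite -(mulKg A B) -e mulVg.
have nBC : B != A * B.
  by apply: contra nA => /eqP e; rewrite -(mulgK B A) -e mulgV.
apply/esym; apply: ktriple; rewrite ?k3_neq1 ?(inj_eq perm_inj) //.
Qed.

Lemma k3_Aut s : k3 s \in Aut [set: Klein].
Proof. by apply/AutTP => A B; rewrite k3_hom. Qed.

Lemma k3M s t : k3 (s * t) = k3 s * k3 t.
Proof.
apply/permP => A; rewrite permM !k3E /k3f.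
case: (boolP (A == 1)) => [_|nA]; first by rewrite eqxx.
by rewrite (negbTE (kl_neq1 _)) klK permM.
Qed.

Lemma k3_inj : injective k3.
Proof.
move=> s t e; apply/permP => i; apply: kl_inj.
have := congr1 (fun f : {perm Klein} => f (kl i)) e.
by rewrite /= !k3E /k3f (negbTE (kl_neq1 i)) klK.
Qed.

Lemma k3_onto (f : {perm Klein}) : f \in Aut [set: Klein] -> exists s, k3 s = f.
Proof.
move=> Af; have f1 := permAut1 Af.
have inj : injective (fun i => lk (f (kl i))).
  have hn k : f (kl k) != 1 by rewrite f1 kl_neq1.
  by move=> i j e; have := congr1 kl e; rewrite !lkK ?hn // => /perm_inj /kl_inj.
exists (perm inj); apply/permP => A; rewrite k3E /k3f.
case: (boolP (A == 1)) => [/eqP ->|nA]; first by apply/esym/eqP; rewrite f1.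
by rewrite permE (lkK A nA) lkK // f1.
Qed.

Section AIso.
Variable gT : finGroupType.
Local Notation L := (LT gT).

Definition phiA (pr : {perm 'I_3} * {perm gT}) : {perm L} := Fperm (k3 pr.1) pr.2 1 1.

Lemma phiAM : {in [set: {perm 'I_3} * {perm gT}] &, {morph phiA : x y / x * y}}.
Proof. by move=> [s g] [t h] _ _; rewrite /phiA /= k3M FpermMA. Qed.

Canonical phiA_morph := Morphism phiAM.

Lemma phiA_inj : 'injm phiA_morph.
Proof.
apply/injmP => [[s g] [t h]] _ _ /= e; rewrite /phiA /= in e.
have eg : g = h.
  apply/permP => x; have := congr1 (fun q : {perm L} => (q (1, x)).2) e.
  by rewrite /= !FpermE /Fplus /= !mulg1.
have ek : k3 s = k3 t.
  apply/permP => A; have := congr1 (fun q : {perm L} => (q (A, 1)).1) e.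
  by rewrite /= !FpermE /Fplus /=.
by rewrite eg (k3_inj _ _ ek).
Qed.

Lemma iso_A : Agrp gT \isog setX [set: {perm 'I_3}] (Aut [set: gT]).
Proof.
rewrite isog_sym.
have := sub_isog (A := setX [set: {perm 'I_3}] (Aut [set: gT])) (subsetT _) phiA_inj.
rewrite morphimEsub ?subsetT //.
suff -> : [set phiA_morph x | x in setX [set: {perm 'I_3}] (Aut [set: gT])] = Agrp gT by [].
apply/setP => p; rewrite AgrpE; apply/imsetP/AsetP.
  case=> [[s g]] /setXP [_ Ag] ->; exists (k3 s), g; split => //; exact: k3_Aut.
case=> f1 [f2 [Af1 Af2 ->]]; have [s es] := k3_onto f1 Af1.
by exists (s, f2); [rewrite inE /= Af2 inE | rewrite /= /phiA /= es].
Qed.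

End AIso.

Section BIso.
Variable gT : finGroupType.
Hypothesis cM : forall x y : gT, x * y = y * x.
Local Notation L := (LT gT).

Lemma B_card : #|Bgrp gT| = (#|Hinv gT| * #|Hinv gT|)%N.
Proof.
have -> : Bgrp gT = [set Fperm 1 1 uv.1 uv.2 | uv in setX (Hinv gT) (Hinv gT)] :> {set _}.
  apply/setP => p; rewrite (BgrpE gT cM); apply/BsetP/imsetP.
    by case=> u [v [Hu Hv ->]]; exists (u, v) => //; apply/setXP.
  by case=> [[u v]] /setXP [Hu Hv] ->; exists u, v.
rewrite card_in_imset ?cardsX // => [[u v] [u' v']] _ _ /= e.
have ea := congr1 (fun q : {perm L} => (q (ka, 1)).2) e.
have eb := congr1 (fun q : {perm L} => (q (kb, 1)).2) e.
by rewrite /= !FpermE /Fplus /= !perm1 !mul1g ?alphaKa ?alphaKb in ea eb; rewrite ea eb.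
Qed.

Lemma B_abelem : 2.-abelem (Bgrp gT).
Proof.
apply/abelemP => //; split.
  apply/centsP => p; rewrite (BgrpE gT cM) => /BsetP [u [v [Hu Hv ->]]] q /BsetP [u' [v' [Hu' Hv' ->]]].
  by rewrite /commute !(FpermMB gT cM) (cM u) (cM v).
move=> p; rewrite (BgrpE gT cM) => /BsetP [u [v [Hu Hv ->]]].
rewrite expgS expg1 (FpermMB gT cM).
by move: Hu Hv; rewrite !HinvE => /eqP -> /eqP ->; rewrite Fperm1.
Qed.

Lemma iso_B n : #|Hinv gT| = (2 ^ n)%N -> Bgrp gT \isog [set: 'rV['Z_2]_(2 * n)].
Proof.
move=> cH; rewrite isog_sym.
have ab : 2.-abelem [set: 'rV['Z_2]_(2 * n)] by exact: (mxabelem.mx_Fp_abelem 1 (2 * n) (isT : prime 2)).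
rewrite (isog_abelem_card _ ab) B_abelem /= B_card cH -expnD addnn -mul2n.
by rewrite cardsT card_mx card_ord mul1n.
Qed.

End BIso.

Section Count.
Variable gT : finGroupType.
Hypothesis cM : forall x y : gT, x * y = y * x.

Definition D2 (G : {set gT}) := [set y in G | y ^+ 2 == 1].

Lemma D2_dprod (G H K : {group gT}) : H \x K = G -> #|D2 G| = (#|D2 H| * #|D2 K|)%N.
Proof.
case/dprodP => _ eHK _ tiHK.
have sq : forall h k : gT, (h * k) ^+ 2 = h ^+ 2 * k ^+ 2 by move=> h k; apply: expgMn; exact: cM.
have -> : D2 G = [set hk.1 * hk.2 | hk in setX (D2 H) (D2 K)].
  apply/setP => y; apply/idP/imsetP.
    rewrite inE -eHK => /andP [/mulsgP [h k Hh Kk ->] y2].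
    have h2 : h ^+ 2 = 1.
      have : h ^+ 2 \in H :&: K.
        rewrite inE groupX //=; move: y2; rewrite sq => /eqP e.
        by rewrite -[h ^+ 2]mulg1 -(mulgV (k ^+ 2)) mulgA e mul1g groupV groupX.
      by rewrite tiHK inE => /eqP.
    exists (h, k) => //; apply/setXP; rewrite !inE Hh Kk h2 eqxx; split => //.
    by move: y2; rewrite sq h2 mul1g.
  case=> [[h k]] /setXP []; rewrite !inE => /andP [Hh /eqP h2] /andP [Kk /eqP k2] ->.
  by rewrite /= -eHK mem_mulg //= sq h2 k2 mulg1 eqxx.
rewrite card_in_imset ?cardsX // => [[h k] [h' k']] /setXP [] /setIdP [Hh _] /setIdP [Kk _].
move=> /setXP [] /setIdP [Hh' _] /setIdP [Kk' _] /= e.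
have e1 : h'^-1 * h = k' * k^-1 by rewrite -[h](mulgK k) e -mulgA mulKg.
have : h'^-1 * h \in H :&: K by rewrite inE groupM ?groupV //= e1 groupM ?groupV.
rewrite tiHK inE => /eqP e2.
have eh : h = h' by rewrite -(mulKVg h' h) e2 mulg1.
by move: e; rewrite eh => /mulgI ->.
Qed.

Lemma D2_cycle (a : gT) : ~~ odd #[a] -> #|D2 <[a]>| = 2.
Proof.
move=> ev; set m := #[a]; set k := m %/ 2.
have m2 : m = (k * 2)%N by rewrite divnK // dvdn2.
have k0 : (0 < k)%N by move: (order_gt0 a); rewrite -/m m2 muln_gt0 => /andP [].
have -> : D2 <[a]> = <[a ^+ k]>.
  apply/setP => y; apply/idP/idP.
    rewrite inE => /andP [/cycleP [i ->]]; rewrite -expgM -order_dvdn -/m m2 dvdn_pmul2r //.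
    by case/dvdnP => j ->; rewrite mulnC expgM mem_cycle.
  move=> hy; rewrite inE (subsetP (cycleX a k)) //=; case/cycleP: hy => j ->.
  by rewrite -!expgM mulnCA -m2 mulnC expgM expg_order expg1n.
rewrite -orderE orderXdiv; last by rewrite -/m m2 dvdn_mulr.
by rewrite -/m m2 mulKn.
Qed.

Lemma D2_odd (G : {group gT}) : odd #|G| -> #|D2 G| = 1%N.
Proof.
move=> oG; have -> : D2 G = 1.
  apply/setP => y; rewrite !inE; apply/idP/idP.
    case/andP => Gy y2; rewrite -order_eq1 -dvdn1.
    have : coprime 2 #|G| by rewrite coprime2n.
    move/eqP <-; rewrite dvdn_gcd order_dvdG // andbT order_dvdn //.
  by move/eqP ->; rewrite group1 expg1n eqxx.
by rewrite cards1.
Qed.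

Lemma D2_big n (x : 'I_n -> gT) (G : {group gT}) : (forall j, ~~ odd #[x j]) ->
  \big[dprod/1]_(j < n) <[x j]> = G -> #|D2 G| = (2 ^ n)%N.
Proof.
elim: n x G => [|n IH] x G hx.
  rewrite big_ord0 => eG; have -> : D2 G = 1.
    apply/setP => y; rewrite !inE -eG inE; apply/andP/idP => [[]//|/eqP ->].
    by rewrite expg1n eqxx.
  by rewrite cards1.
rewrite big_ord_recr /= => eG.
case/dprodP: (eG) => [[Q C eQ eC] _ _ _].
rewrite eQ eC in eG; rewrite (D2_dprod G Q C eG) -eC D2_cycle // expnS mulnC.
congr (_ * _)%N; apply: (IH (fun i => x (widen_ord (leqnSn n) i))) => //.
Qed.

End Count.

Theorem theorem5p9 (gT : finGroupType) (s : nat) (x : 'I_s -> gT) (M1 : {group gT}) :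
  abelian [set: gT] ->
  2 < exponent [set: gT] ->
  ~~ odd #|gT| ->
  (1 <= s)%N ->
  (forall j, ~~ odd #[x j]) ->
  odd #|M1| ->
  \big[dprod/1]_(j < s) <[x j]> \x M1 = [set: gT] ->
  exists nBA : {acts Agrp gT, on group Bgrp gT | 'J},
    [/\ AutL gT \isog [set: sdprod_by (actby_groupAction nBA)],
        HalfL gT \isog setX [set: 'Z_2] [set: sdprod_by (actby_groupAction nBA)],
        Agrp gT \isog setX [set: {perm 'I_3}] (Aut [set: gT])
      & Bgrp gT \isog [set: 'rV['Z_2]_(2 * s)]].
Proof.
move=> cG e2 _ _ hx oM1 eG.
have cM : forall a b : gT, a * b = b * a.
  by move=> a b; apply: (centsP cG); rewrite inE.
have [z hz] : exists z : gT, z * z != 1.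
  case: (pickP (fun z : gT => z * z != 1)) => [z hz|h]; first by exists z.
  exfalso; suff : exponent [set: gT] %| 2.
    by move/dvdn_leq => /(_ isT); rewrite leqNgt e2.
  by apply/exponentP => y _; rewrite expgS expg1; move/negbFE/eqP: (h y).
exists (nBA gT cM z hz); split.
- exact: iso_AutL.
- exact: iso_HalfL.
- exact: iso_A.
apply: (iso_B gT cM).
have -> : Hinv gT = D2 gT [set: gT] by apply/setP => y; rewrite !inE.
case/dprodP: (eG) => [[Q C eQ eC] _ _ _]; rewrite eQ in eG.
rewrite (D2_dprod gT cM [set: gT]%G Q M1 eG) (D2_big gT cM s x Q hx eQ) (D2_odd gT M1 oM1).
by rewrite muln1.
Qed.
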